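(* Let $L\subseteq Q$ be an extension of Lie algebras, $I$ an ideal of $L$, and $q_1,\dots,q_n\in Q$ with $[q_i,I]\subseteq L$ for all $i=1,\dots,n$. Let $\mu=\mathrm{ad}_{q_1}\cdots\mathrm{ad}_{q_n}\in A(Q)$. Then $\mu\,(\widetilde I)^n\subseteq A_0$ and $(\widetilde I)^n\mu\subseteq A_0$, where $(\widetilde I)^n$ is the $n$-th power of $\widetilde I$ in the associative algebra $A_Q(L)$.
   Context: Lie algebras over a commutative unital ring $\Phi$. For a Lie algebra $Q$, $\mathrm{ad}_x(y)=[x,y]$, and $A(Q)$ is the associative subalgebra of $\mathrm{End}_\Phi(Q)$ generated by $\{\mathrm{ad}_x:x\in Q\}$. For a Lie subalgebra $L\subseteq Q$: $A_Q(L)$ is the subalgebra of $A(Q)$ generated by $\{\mathrm{ad}_x:x\in L\}$, $A_0=\{\mu\in A(Q):\mu(L)\subseteq L\}$, and for an ideal $I$ of $L$, $\widetilde I$ is the two-sided ideal of $A_Q(L)$ generated by $\{\mathrm{ad}_x:x\in I\}$. *)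

(* Defs.v *)
From HB Require Import structures.
From mathcomp Require Import all_boot all_order all_algebra.
Set Implicit Arguments. Unset Strict Implicit. Unset Printing Implicit Defensive.
Import GRing.Theory.
Local Open Scope ring_scope.

Section Lie.
Variables (Phi : comPzRingType) (Q : lmodType Phi).

Definition is_lie_bracket (br : Q -> Q -> Q) : Prop :=
  [/\ (forall a x y z, br (a *: x + y) z = a *: br x z + br y z),
      (forall a x y z, br x (a *: y + z) = a *: br x y + br x z),
      (forall x, br x x = 0)
    & (forall x y z, br x (br y z) + br y (br z x) + br z (br x y) = 0)].

Definition is_submod (S : Q -> Prop) : Prop :=
  [/\ S 0, (forall x y, S x -> S y -> S (x + y)) & (forall a x, S x -> S (a *: x))].

Definition lie_subalg (br : Q -> Q -> Q) (L : Q -> Prop) : Prop :=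
  is_submod L /\ (forall x y, L x -> L y -> L (br x y)).

Definition lie_ideal (br : Q -> Q -> Q) (L I : Q -> Prop) : Prop :=
  [/\ (forall x, I x -> L x), is_submod I & (forall x y, L x -> I y -> I (br x y))].

Definition ad (br : Q -> Q -> Q) (x : Q) : Q -> Q := br x.

Definition fzero : Q -> Q := fun _ => 0.
Definition fadd (f g : Q -> Q) : Q -> Q := fun v => f v + g v.
Definition fscale (a : Phi) (f : Q -> Q) : Q -> Q := fun v => a *: f v.

(* The (non-unital) associative subalgebra of End(Q) generated by S. *)
Inductive alg_gen (S : (Q -> Q) -> Prop) : (Q -> Q) -> Prop :=
  | ag_gen f : S f -> alg_gen S f
  | ag_zero : alg_gen S fzero
  | ag_add f g : alg_gen S f -> alg_gen S g -> alg_gen S (fadd f g)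
  | ag_scale a f : alg_gen S f -> alg_gen S (fscale a f)
  | ag_mul f g : alg_gen S f -> alg_gen S g -> alg_gen S (f \o g).

Definition A_alg (br : Q -> Q -> Q) : (Q -> Q) -> Prop :=
  alg_gen (fun f => exists x, f = ad br x).

Definition A_Q (br : Q -> Q -> Q) (L : Q -> Prop) : (Q -> Q) -> Prop :=
  alg_gen (fun f => exists2 x, L x & f = ad br x).

Definition A_0 (br : Q -> Q -> Q) (L : Q -> Prop) (mu : Q -> Q) : Prop :=
  A_alg br mu /\ (forall x, L x -> L (mu x)).

Inductive ideal_gen (R S : (Q -> Q) -> Prop) : (Q -> Q) -> Prop :=
  | ig_gen f : S f -> ideal_gen R S f
  | ig_zero : ideal_gen R S fzero
  | ig_add f g : ideal_gen R S f -> ideal_gen R S g -> ideal_gen R S (fadd f g)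
  | ig_scale a f : ideal_gen R S f -> ideal_gen R S (fscale a f)
  | ig_mull r f : R r -> ideal_gen R S f -> ideal_gen R S (r \o f)
  | ig_mulr f r : R r -> ideal_gen R S f -> ideal_gen R S (f \o r).

Definition I_tilde (br : Q -> Q -> Q) (L I : Q -> Prop) : (Q -> Q) -> Prop :=
  ideal_gen (A_Q br L) (fun f => exists2 x, I x & f = ad br x).

Inductive fspan (S : (Q -> Q) -> Prop) : (Q -> Q) -> Prop :=
  | fs_gen f : S f -> fspan S f
  | fs_zero : fspan S fzero
  | fs_add f g : fspan S f -> fspan S g -> fspan S (fadd f g)
  | fs_scale a f : fspan S f -> fspan S (fscale a f).

Fixpoint ideal_pow (J : (Q -> Q) -> Prop) (n : nat) : (Q -> Q) -> Prop :=
  match n with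
  | 0%N => J (* unused: the statement assumes n >= 1 *)
  | 1%N => J
  | m.+1 => fspan (fun h => exists f g, [/\ J f, ideal_pow J m g & h = f \o g])
  end.

Definition ad_prod (br : Q -> Q -> Q) (qs : seq Q) : Q -> Q :=
  foldr (fun q f => ad br q \o f) id qs.

End Lie.

(* Main.v *)
Require Import Defs.
From HB Require Import structures.
From mathcomp Require Import all_boot all_order all_algebra.
From Stdlib Require Import FunctionalExtensionality.
Local Open Scope ring_scope.
Import GRing.Theory.

Section Proof7.
Variables (Phi : comPzRingType) (Q : lmodType Phi).
Variables (br : Q -> Q -> Q) (L I : Q -> Prop).
Hypothesis Hbr : is_lie_bracket br.
Hypothesis HL : lie_subalg br L.
Hypothesis HI : lie_ideal br L I.

Definition lin (f : Q -> Q) := (forall x y, f (x + y) = f x + f y) /\ (forall a x, f (a *: x) = a *: f x).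

Lemma dbl0 (x : Q) : x = x + x -> x = 0.
Proof. move/(congr1 (fun y => y - x)). by rewrite addrK subrr => ->. Qed.

Lemma lin0 f : lin f -> f 0 = 0.
Proof. move=> [hD _]. apply: dbl0. by rewrite -hD addr0. Qed.

Lemma brDr x y z : br x (y + z) = br x y + br x z.
Proof. case: Hbr => _ h _ _. by have := h 1 x y z; rewrite !scale1r. Qed.
Lemma br0r x : br x 0 = 0.
Proof. apply: dbl0. by rewrite -brDr addr0. Qed.
Lemma brZr a x y : br x (a *: y) = a *: br x y.
Proof. case: Hbr => _ h _ _. by have := h a x y 0; rewrite !addr0 br0r addr0. Qed.
Lemma brDl x y z : br (x + y) z = br x z + br y z.
Proof. case: Hbr => h _ _ _. by have := h 1 x y z; rewrite !scale1r. Qed.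
Lemma br0l x : br 0 x = 0.
Proof. apply: dbl0. by rewrite -brDl addr0. Qed.
Lemma brC x y : br x y = - br y x.
Proof. case: Hbr => _ _ h0 _. have := h0 (x + y).
  rewrite brDl !brDr !h0 add0r addr0 => h. apply/eqP. by rewrite -addr_eq0 h. Qed.
Lemma brNr x y : br x (- y) = - br x y.
Proof. by have := brZr (-1) x y; rewrite !scaleN1r. Qed.
Lemma jac x y z : br x (br y z) = br (br x y) z + br y (br x z).
Proof. case: Hbr => _ _ _ h. have e := h x y z.
  rewrite (brC z (br x y)) (brC z x) brNr in e.
  by move/eqP: e; rewrite -addrA -opprD subr_eq0 addrC => /eqP.
Qed.

Lemma ad_lin x : lin (ad br x).
Proof. split; [exact: brDr | move=> a y; exact: brZr]. Qed.

Lemma fspan_lin (S : (Q -> Q) -> Prop) f : (forall g, S g -> lin g) -> fspan S f -> lin f.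
Proof. move=> hS; elim=> {f} [f /hS //| | f g _ [f1 f2] _ [g1 g2] | a f _ [f1 f2]].
- by split=> *; rewrite /fzero ?addr0 ?scaler0.
- split=> *; rewrite /fadd ?f1 ?g1 ?f2 ?g2 ?scalerDr //. by rewrite addrACA.
- split=> *; rewrite /fscale ?f1 ?f2 ?scalerDr //. by rewrite !scalerA mulrC.
Qed.

Lemma alg_lin (S : (Q -> Q) -> Prop) f : (forall g, S g -> lin g) -> alg_gen S f -> lin f.
Proof. move=> hS; elim=> {f} [f /hS //| | f g _ [f1 f2] _ [g1 g2] | a f _ [f1 f2] | f g _ [f1 f2] _ [g1 g2]].
- by split=> *; rewrite /fzero ?addr0 ?scaler0.
- split=> *; rewrite /fadd ?f1 ?g1 ?f2 ?g2 ?scalerDr //. by rewrite addrACA.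
- split=> *; rewrite /fscale ?f1 ?f2 ?scalerDr //. by rewrite !scalerA mulrC.
- by split=> * /=; rewrite ?g1 ?f1 ?g2 ?f2.
Qed.

Lemma ideal_lin (R S : (Q -> Q) -> Prop) f : (forall g, R g -> lin g) -> (forall g, S g -> lin g) -> ideal_gen R S f -> lin f.
Proof. move=> hR hS; elim=> {f} [f /hS //| | f g _ [f1 f2] _ [g1 g2] | a f _ [f1 f2] | r f /hR [r1 r2] _ [f1 f2] | f r /hR [r1 r2] _ [f1 f2]].
- by split=> *; rewrite /fzero ?addr0 ?scaler0.
- split=> *; rewrite /fadd ?f1 ?g1 ?f2 ?g2 ?scalerDr //. by rewrite addrACA.
- split=> *; rewrite /fscale ?f1 ?f2 ?scalerDr //. by rewrite !scalerA mulrC.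
- by split=> * /=; rewrite ?r1 ?f1 ?r2 ?f2.
- by split=> * /=; rewrite ?r1 ?f1 ?r2 ?f2.
Qed.

Notation AQ := (A_Q br L).
Notation J := (I_tilde br L I).

Lemma AQ_lin f : AQ f -> lin f.
Proof. apply: alg_lin => g [x _ ->]; exact: ad_lin. Qed.
Lemma J_lin f : J f -> lin f.
Proof. apply: ideal_lin; [exact: AQ_lin | move=> g [x _ ->]; exact: ad_lin]. Qed.

Lemma lin_comp f g : lin f -> lin g -> lin (f \o g).
Proof. move=> [f1 f2] [g1 g2]; split=> * /=; by rewrite ?g1 ?f1 ?g2 ?f2. Qed.

Inductive vspan (S : Q -> Prop) : Q -> Prop :=
  | vs_gen v : S v -> vspan S v
  | vs_zero : vspan S 0
  | vs_add v w : vspan S v -> vspan S w -> vspan S (v + w)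
  | vs_scale a v : vspan S v -> vspan S (a *: v).

Fixpoint Sk (k : nat) : Q -> Prop :=
  match k with
  | 0%N => L
  | m.+1 => match m with
            | 0%N => I
            | _ => vspan (fun v => exists x z, [/\ I x, Sk m z & v = br x z])
            end
  end.

Lemma Sk_sub k : is_submod (Sk k).
Proof.
case: k => [|[|k]] /=; first by case: HL.
- by case: HI.
- split; [exact: vs_zero | move=> *; exact: vs_add | move=> *; exact: vs_scale].
Qed.

Lemma Sk_add k v w : Sk k v -> Sk k w -> Sk k (v + w).
Proof. by case: (Sk_sub k) => _ h _; apply: h. Qed.
Lemma Sk_0 k : Sk k 0.
Proof. by case: (Sk_sub k). Qed.
Lemma Sk_scale k a v : Sk k v -> Sk k (a *: v).
Proof. by case: (Sk_sub k) => _ _ h; apply: h. Qed.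
Lemma Sk_opp k v : Sk k v -> Sk k (- v).
Proof. by move=> h; rewrite -scaleN1r; apply: Sk_scale. Qed.

Lemma I_br x z : I x -> L z -> I (br x z).
Proof. move=> Ix Lz. rewrite brC. apply: (Sk_opp 1). case: HI => _ _ h; exact: h. Qed.

Lemma Sk_I k x z : I x -> Sk k z -> Sk k.+1 (br x z).
Proof. case: k => [|k] Ix hz /=; first exact: I_br.
apply: vs_gen; by exists x, z. Qed.

Lemma Sk_L k l z : L l -> Sk k z -> Sk k (br l z).
Proof.
elim: k l z => [|k IH] l z Ll.
- by case: HL => _ h; apply: h.
case: k IH => [|k] IH /=.
- by case: HI => _ _ h; apply: h.
elim=> [v [x [w [Ix Hw ->]]] | | v w _ Hv _ Hw | a v _ Hv].
- rewrite jac. apply: vs_add; apply: vs_gen.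
  + exists (br l x), w; split => //. by case: HI => _ _ h; apply: h.
  + exists x, (br l w); split => //. exact: IH.
- rewrite br0r; exact: vs_zero.
- rewrite brDr; exact: vs_add.
- rewrite brZr; exact: vs_scale.
Qed.

Lemma Sk_q q k z : (forall y, I y -> L (br q y)) -> Sk k.+1 z -> Sk k (br q z).
Proof.
move=> hq; elim: k z => [|k IH] z; first exact: hq.
rewrite [Sk k.+2]/=.
elim=> [v [x [w [Ix Hw ->]]] | | v w _ Hv _ Hw | a v _ Hv].
- rewrite jac. apply: Sk_add.
  + apply: Sk_L => //; exact: hq.
  + apply: Sk_I => //; exact: IH.
- rewrite br0r; exact: Sk_0.
- rewrite brDr; exact: Sk_add.
- rewrite brZr; exact: Sk_scale.
Qed.

Lemma AQ_Sk r k v : AQ r -> Sk k v -> Sk k (r v).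
Proof.
move=> hr; elim: hr k v => {r} [f [y Ly ->] | | f g _ IHf _ IHg | a f _ IHf | f g _ IHf _ IHg] k v hv.
- exact: Sk_L.
- exact: Sk_0.
- apply: Sk_add; [exact: IHf | exact: IHg].
- apply: Sk_scale; exact: IHf.
- apply: IHf; exact: IHg.
Qed.

Lemma J_Sk f k v : J f -> Sk k v -> Sk k.+1 (f v).
Proof.
move=> hf; elim: hf k v => {f} [f [x Ix ->] | | f g _ IHf _ IHg | a f _ IHf | r f hr _ IHf | f r hr _ IHf] k v hv.
- exact: Sk_I.
- exact: Sk_0.
- apply: Sk_add; [exact: IHf | exact: IHg].
- apply: Sk_scale; exact: IHf.
- exact: (AQ_Sk _ _ _ hr (IHf _ _ hv)).
- exact: (IHf _ _ (AQ_Sk _ _ _ hr hv)).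
Qed.

Lemma pow_Sk m nu k v : (0 < m)%N -> ideal_pow J m nu -> Sk k v -> Sk (k + m) (nu v).
Proof.
elim: m nu k v => [//|m IH] nu k v _.
case: m IH => [|m] IH.
- move=> /= hnu hv; rewrite addn1; exact: J_Sk.
move=> hp hv; elim: hp => [h [f [g [Jf Pg ->]]] | | f g _ Hf _ Hg | a f _ Hf].
- rewrite addnS /=. apply: J_Sk => //. exact: IH.
- exact: Sk_0.
- exact: Sk_add.
- exact: Sk_scale.
Qed.

Lemma adp_Sk qs j v : (forall q, q \in qs -> forall y, I y -> L (br q y)) ->
  Sk (size qs + j) v -> Sk j (ad_prod br qs v).
Proof.
elim: qs j v => [|q qs IH] j v hq hv //=.
apply: Sk_q; first by apply: hq; rewrite mem_head.
apply: IH; first by move=> q' hq'; apply: hq; rewrite inE hq' orbT.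
by rewrite addnS.
Qed.

Fixpoint T (j : nat) : Q -> Prop :=
  match j with
  | 0%N => L
  | j'.+1 => fun v => forall f, J f -> T j' (f v)
  end.

Lemma T_sub j : [/\ T j 0, (forall v w, T j v -> T j w -> T j (v + w))
   & (forall a v, T j v -> T j (a *: v))].
Proof.
elim: j => [|j [h0 hD hZ]] /=; first by case: HL => -[].
split.
- move=> f /J_lin hf; by rewrite lin0.
- move=> v w hv hw f hf. case: (J_lin _ hf) => f1 _. rewrite f1. apply: hD; [exact: hv | exact: hw].
- move=> a v hv f hf. case: (J_lin _ hf) => _ f2. rewrite f2. apply: hZ; exact: hv.
Qed.

Lemma T_AQ r j v : AQ r -> T j v -> T j (r v).
Proof.
case: j => [|j] hr hv /=.
- exact: (AQ_Sk _ 0 _ hr hv).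
- move=> f hf. exact: (hv (f \o r) (ig_mulr hr hf)).
Qed.

Definition A1 (r : Q -> Q) := r = id \/ AQ r.

Definition N := fspan (fun h => exists r x, [/\ A1 r, I x & h = r \o ad br x]).

Lemma N_lin f : N f -> lin f.
Proof.
apply: fspan_lin => g [r [x [[->|hr] _ ->]]].
- exact: ad_lin.
- apply: lin_comp; [exact: AQ_lin | exact: ad_lin].
Qed.

Lemma N_mull r f : AQ r -> N f -> N (r \o f).
Proof.
move=> hr; have [r1 r2] := AQ_lin _ hr.
elim=> {f} [h [r' [x [hr' Ix ->]]] | | f g _ Hf _ Hg | a f _ Hf].
- apply: fs_gen; exists (r \o r'), x; split => //.
  case: hr' => [->|hr']; right => //. exact: ag_mul.
- have -> : r \o (@fzero Phi Q) = (@fzero Phi Q). apply: functional_extensionality => v /=.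
    by rewrite /fzero lin0.
  exact: fs_zero.
- have -> : r \o fadd f g = fadd (r \o f) (r \o g).
    apply: functional_extensionality => v /=. by rewrite /fadd r1.
  exact: fs_add.
- have -> : r \o fscale a f = fscale a (r \o f).
    apply: functional_extensionality => v /=. by rewrite /fscale r2.
  exact: fs_scale.
Qed.

Lemma N_mull1 r f : A1 r -> N f -> N (r \o f).
Proof. case=> [->|hr] hf; [exact: hf | exact: N_mull]. Qed.

Lemma N_mulr s : AQ s -> forall f, N f -> N (f \o s).
Proof.
elim=> {s} [s [l Ll ->] | | s1 s2 _ IH1 _ IH2 | a s _ IH | s1 s2 _ IH1 _ IH2] f hf.
- elim: hf => {f} [h [r [x [hr Ix ->]]] | | f g _ Hf _ Hg | a f _ Hf].
  + have -> : (r \o ad br x) \o ad br l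
       = r \o fadd (ad br l \o ad br x) (ad br (br x l)).
      apply: functional_extensionality => v /=. by rewrite /fadd /ad jac addrC.
    apply: N_mull1 => //. apply: fs_add; apply: fs_gen.
    * exists (ad br l), x; split => //. right; apply: ag_gen; by exists l.
    * exists id, (br x l); split => //; first by left.
      by case: HI => _ _ h0; exact: I_br.
  + exact: fs_zero.
  + exact: (fs_add Hf Hg).
  + exact: (fs_scale a Hf).
- have -> : f \o (@fzero Phi Q) = (@fzero Phi Q). apply: functional_extensionality => v /=.
    by rewrite /fzero lin0 //; exact: N_lin.
  exact: fs_zero.
- have [f1 _] := N_lin _ hf.
  have -> : f \o fadd s1 s2 = fadd (f \o s1) (f \o s2).
    apply: functional_extensionality => v /=. by rewrite /fadd f1.
  exact: fs_add (IH1 _ hf) (IH2 _ hf).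
- have [_ f2] := N_lin _ hf.
  have -> : f \o fscale a s = fscale a (f \o s).
    apply: functional_extensionality => v /=. by rewrite /fscale f2.
  exact: fs_scale (IH _ hf).
- exact: (IH2 _ (IH1 _ hf)).
Qed.

Lemma J_N f : J f -> N f.
Proof.
elim=> {f} [f [x Ix ->] | | f g _ Hf _ Hg | a f _ Hf | r f hr _ Hf | f r hr _ Hf].
- apply: fs_gen; exists id, x; split => //; by left.
- exact: fs_zero.
- exact: fs_add.
- exact: fs_scale.
- exact: N_mull.
- exact: N_mulr.
Qed.

Lemma T_q q j v : (forall y, I y -> L (br q y)) -> T j v -> T j.+1 (br q v).
Proof.
move=> hq; elim: j v => [|j IH] v hv f /J_N hf;
elim: hf => {f} [h [r [x [hr Ix ->]]] | | f g _ Hf _ Hg | a f _ Hf];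
  try (by case: (T_sub 0)); try (by case: (T_sub j.+1));
  try (by case: (T_sub 0) => _ hD _; apply: hD);
  try (by case: (T_sub j.+1) => _ hD _; apply: hD);
  try (by case: (T_sub 0) => _ _ hZ; apply: hZ);
  try (by case: (T_sub j.+1) => _ _ hZ; apply: hZ).
- have hLxq : L (br x q). rewrite brC. apply: (Sk_opp 0). exact: hq.
  have key : T 0 (br x (br q v)).
    rewrite jac. case: (T_sub 0) => _ hD _; apply: hD.
    + apply: (T_AQ (ad br (br x q)) 0 v) => //; apply: ag_gen; by exists (br x q).
    + apply: hq; exact: I_br.
  case: hr => [->|hr] //. exact: (T_AQ _ _ _ hr key).
- have hLxq : L (br x q). rewrite brC. apply: (Sk_opp 0). exact: hq.
  have key : T j.+1 (br x (br q v)).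
    rewrite jac. case: (T_sub j.+1) => _ hD _; apply: hD.
    + apply: (T_AQ (ad br (br x q)) j.+1 v) => //; apply: ag_gen; by exists (br x q).
    + apply: IH. apply: hv. apply: ig_gen; by exists x.
  case: hr => [->|hr] //. exact: (T_AQ _ _ _ hr key).
Qed.

Lemma adp_T qs j v : (forall q, q \in qs -> forall y, I y -> L (br q y)) ->
  T j v -> T (j + size qs) (ad_prod br qs v).
Proof.
elim: qs j v => [|q qs IH] j v hq hv /=; first by rewrite addn0.
rewrite addnS. apply: T_q; first by apply: hq; rewrite mem_head.
apply: IH => //. by move=> q' hq'; apply: hq; rewrite inE hq' orbT.
Qed.

Lemma pow_T m nu k v : (0 < m)%N -> ideal_pow J m nu -> T (k + m) v -> T k (nu v).
Proof.
elim: m nu k v => [//|m IH] nu k v _.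
case: m IH => [|m] IH.
- move=> /= hnu; rewrite addn1 => hv; exact: hv.
move=> hp hv; elim: hp => [h [f [g [Jf Pg ->]]] | | f g _ Hf _ Hg | a f _ Hf].
- have hg : T k.+1 (g v). apply: (IH g k.+1 v) => //. by rewrite addSn -addnS.
  exact: hg.
- by case: (T_sub k).
- by case: (T_sub k) => _ hD _; apply: hD.
- by case: (T_sub k) => _ _ hZ; apply: hZ.
Qed.

Lemma AQ_A f : AQ f -> A_alg br f.
Proof.
elim=> {f} [f [x _ ->] | | f g _ Hf _ Hg | a f _ Hf | f g _ Hf _ Hg].
- apply: ag_gen; by exists x.
- exact: ag_zero.
- exact: ag_add.
- exact: ag_scale.
- exact: ag_mul.
Qed.

Lemma J_A f : J f -> A_alg br f.
Proof.
elim=> {f} [f [x _ ->] | | f g _ Hf _ Hg | a f _ Hf | r f hr _ Hf | f r hr _ Hf].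
- apply: ag_gen; by exists x.
- exact: ag_zero.
- exact: ag_add.
- exact: ag_scale.
- apply: ag_mul => //; exact: AQ_A.
- apply: ag_mul => //; exact: AQ_A.
Qed.

Lemma pow_A m nu : (0 < m)%N -> ideal_pow J m nu -> A_alg br nu.
Proof.
elim: m nu => [//|m IH] nu _.
case: m IH => [|m] IH; first exact: J_A.
elim=> [h [f [g [Jf Pg ->]]] | | f g _ Hf _ Hg | a f _ Hf].
- apply: ag_mul; [exact: J_A | exact: IH].
- exact: ag_zero.
- exact: ag_add.
- exact: ag_scale.
Qed.

Lemma adp_A q qs : A_alg br (ad_prod br (q :: qs)).
Proof.
elim: qs q => [|q' qs IH] q.
- change (A_alg br (ad br q)). apply: ag_gen; by exists q.
- apply: ag_mul; [apply: ag_gen; by exists q | exact: IH].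
Qed.

End Proof7.

Theorem mainTheorem7 (Phi : comPzRingType) (Q : lmodType Phi)
    (br : Q -> Q -> Q) (L I : Q -> Prop) (qs : seq Q) :
  is_lie_bracket br ->
  lie_subalg br L ->
  lie_ideal br L I ->
  (0 < size qs)%N ->
  (forall q, q \in qs -> forall y, I y -> L (br q y)) ->
  forall nu, ideal_pow (I_tilde br L I) (size qs) nu ->
    A_0 br L (ad_prod br qs \o nu) /\ A_0 br L (nu \o ad_prod br qs).
Proof.
move=> Hbr HL HI hs hq nu hnu.
have hA : A_alg br nu := pow_A _ _ _ _ _ _ _ hs hnu.
have hP : A_alg br (ad_prod br qs) by case: qs hs hq hnu => [//|q qs'] *; exact: adp_A.
split; split.
- exact: ag_mul.
- move=> x Lx /=.
  have h1 : Sk Phi Q br L I 0 x by [].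
  have h2 := pow_Sk _ _ _ _ _ Hbr HL HI _ _ _ _ hs hnu h1.
  rewrite add0n in h2.
  apply: (adp_Sk _ _ _ _ _ Hbr HL HI qs 0 _ hq). by rewrite addn0.
- exact: ag_mul.
- move=> x Lx /=.
  have h1 : T Phi Q br L I 0 x by [].
  have h2 := adp_T _ _ _ _ _ Hbr HL HI _ _ _ hq h1.
  exact: (pow_T _ _ _ _ _ Hbr HL _ _ 0 _ hs hnu h2).
Qed.
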